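(* Fix $\epsilon>0$. For all $f\in\mathcal{F}_k$ and all $u\in\mathbb{R}^k$, $\hat\Psi(u)\subseteq\Psi^f(u)$.
   Context: $[k]=\{1,\dots,k\}$, $\mathcal{Y}=\{-1,1\}^k$, $\mathcal{V}=\{-1,0,1\}^k$, $\Delta_\mathcal{Y}$ the distributions on $\mathcal{Y}$. $u\odot u'$ entrywise product, $\mathbbm{1}$ all-ones, $(x)_+$ entrywise positive part; $\boxed{u}=\mathrm{sign}(u)\odot\min(|u|,\mathbbm{1})$ is the entrywise clipping of $u$ to $[-1,1]^k$. For $A\subseteq\mathbb{R}^k$, $d_\infty(A,u)=\inf_{a\in A}\|a-u\|_\infty$. For a permutation $\pi$ of $[k]$ and $i\in\{0,\dots,k\}$, $\mathbbm{1}_{\pi,i}$ is the indicator vector of $\{\pi_1,\dots,\pi_i\}$; $V_{\pi,y}=\{\mathbbm{1}_{\pi,i}\odot y: i=0,\dots,k\}$; $\mathcal{V}^{\text{face}}=\bigcup_{\pi,y\in\mathcal{Y}}2^{V_{\pi,y}}$. $\mathcal{F}_k$: submodular, increasing, normalized set functions $f:2^{[k]}\to\mathbb{R}$. Lovász extension $F(x)=\max_\pi\sum_{i}x_{\pi_i}(f(\{\pi_1,..,\pi_i\})-f(\{\pi_1,..,\pi_{i-1}\}))$; Lovász hinge $L^f(u,y)=F((\mathbbm{1}-u\odot y)_+)$; $L^f(u;p)=\sum_yp_yL^f(u,y)$. Define $\hat\Psi(u)=\bigcap\{V\in\mathcal{V}^{\text{face}}: d_\infty(\mathrm{conv}\,V,\boxed{u})<\epsilon\}$.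 Let $\mathcal{U}^f=\{\arg\min_{u'\in\mathbb{R}^k}L^f(u';p): p\in\Delta_\mathcal{Y}\}$ and $\Psi^f(u)=\mathcal{V}\cap\bigcap\{U\in\mathcal{U}^f: d_\infty(U,u)<\epsilon\}$ (an empty intersection of subsets of $\mathbb{R}^k$ is $\mathbb{R}^k$). *)

(* Defs.v *)
From HB Require Import structures.
From mathcomp Require Import all_boot all_order all_algebra.
From mathcomp Require Import fingroup perm.
From mathcomp Require Import boolp classical_sets reals.
Set Implicit Arguments. Unset Strict Implicit. Unset Printing Implicit Defensive.
Import Order.TTheory GRing.Theory Num.Theory.
Local Open Scope ring_scope.
Local Open Scope classical_set_scope.

Section Defs.
Variable R : realType.
Variable k : nat.

Definition vec := 'I_k -> R.
(* Y = {-1,1}^k, encoded by boolean vectors *)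
Definition signvec := {ffun 'I_k -> bool}.
Definition yvec (b : signvec) : vec := fun i => if b i then 1 else -1.
Definition emul (u v : vec) : vec := fun i => u i * v i.
Definition supnorm (u : vec) : R := \big[Num.max/0]_(i < k) `|u i|.
Definition dinf_lt (A : set vec) (u : vec) (eps : R) : Prop :=
  exists2 a, A a & supnorm (fun i => a i - u i) < eps.
Definition clip (u : vec) : vec := fun i => Num.sg (u i) * Num.min `|u i| 1.
Definition Vset : set vec := [set v | forall i, v i = -1 \/ v i = 0 \/ v i = 1].
(* indicator of {pi_1,...,pi_i} (0-based: {pi 0, ..., pi (i-1)}) *)
Definition ind (pi : {perm 'I_k}) (i : 'I_k.+1) : vec :=
  fun j => if (nat_of_ord ((pi^-1)%g j) < i)%N then 1 else 0.
Definition Vpy (pi : {perm 'I_k}) (b : signvec) : set vec :=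
  [set v | exists i : 'I_k.+1, v = emul (ind pi i) (yvec b)].
Definition Vface : set (set vec) :=
  [set V | exists (pi : {perm 'I_k}) (b : signvec), V `<=` Vpy pi b].
Definition conv (A : set vec) : set vec :=
  [set x | exists n (a : 'I_n -> vec) (l : 'I_n -> R),
     [/\ forall j, A (a j), forall j, 0 <= l j, \sum_(j < n) l j = 1 &
         x = fun i => \sum_(j < n) l j * a j i]].
Definition Psihat (eps : R) (u : vec) : set vec :=
  \bigcap_(V in [set V | Vface V /\ dinf_lt (conv V) (clip u) eps]) V.

Definition submodular (f : {set 'I_k} -> R) : Prop :=
  forall A B, f (A :|: B) + f (A :&: B) <= f A + f B.
Definition increasing (f : {set 'I_k} -> R) : Prop :=
  forall A B : {set 'I_k}, A \subset B -> f A <= f B.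
Definition normalized (f : {set 'I_k} -> R) : Prop := f finset.set0 = 0.
Definition inFk (f : {set 'I_k} -> R) : Prop :=
  [/\ submodular f, increasing f & normalized f].

Definition prefix (pi : {perm 'I_k}) (i : nat) : {set 'I_k} :=
  [set pi j | j : 'I_k & (nat_of_ord j < i)%N].
Definition lovasz_term (f : {set 'I_k} -> R) (x : vec) (pi : {perm 'I_k}) : R :=
  \sum_(i < k) x (pi i) * (f (prefix pi i.+1) - f (prefix pi i)).
Definition lovasz (f : {set 'I_k} -> R) (x : vec) : R :=
  \big[Num.max/lovasz_term f x 1%g]_(pi : {perm 'I_k}) lovasz_term f x pi.
Definition lovasz_hinge (f : {set 'I_k} -> R) (u : vec) (b : signvec) : R :=
  lovasz f (fun i => Num.max (1 - u i * yvec b i) 0).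
Definition distrY (p : {ffun signvec -> R}) : Prop :=
  (forall y, 0 <= p y) /\ \sum_y p y = 1.
Definition Lexp (f : {set 'I_k} -> R) (u : vec) (p : {ffun signvec -> R}) : R :=
  \sum_y p y * lovasz_hinge f u y.
Definition argminL (f : {set 'I_k} -> R) (p : {ffun signvec -> R}) : set vec :=
  [set u | forall u', Lexp f u p <= Lexp f u' p].
Definition Uf (f : {set 'I_k} -> R) : set (set vec) :=
  [set U | exists p, distrY p /\ U = argminL f p].
Definition Psif (eps : R) (f : {set 'I_k} -> R) (u : vec) : set vec :=
  Vset `&` \bigcap_(U in [set U | Uf f U /\ dinf_lt U u eps]) U.
End Defs.

(* Main.v *)
From Pilot Require Import Defs.
From HB Require Import structures.
From mathcomp Require Import all_boot all_order all_algebra.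
From mathcomp Require Import fingroup perm.
From mathcomp Require Import boolp classical_sets reals.
From mathcomp Require Import ring lra zify.
Import Order.TTheory GRing.Theory Num.Theory.
Local Open Scope ring_scope.

Section B.
Variable k : nat.

Lemma perm_of_order (lt : rel 'I_k) : irreflexive lt -> transitive lt ->
  (forall a b, a != b -> lt a b || lt b a) ->
  exists r : {perm 'I_k}, forall a b, lt a b -> (r a < r b)%N.
Proof.
move=> irr tr tot.
pose rk j := #|[set j' | lt j' j]|.
have rk_lt j : (rk j < k)%N.
  rewrite -[k]card_ord; apply: proper_card; apply/properP; split.
    by apply/fintype.subsetP.
  by exists j; rewrite ?inE ?irr.
have rk_mono a b : lt a b -> (rk a < rk b)%N.
  move=> hab; apply: proper_card; apply/properP; split.
    by apply/fintype.subsetP => x; rewrite !inE => h; apply: tr h hab.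
  by exists a; rewrite !inE ?irr.
pose ro j := Ordinal (rk_lt j).
have ro_inj : injective ro.
  move=> a b h; apply/eqP; apply/negPn/negP => /tot /orP[] /rk_mono;
    by move: h => /(congr1 val) /= ->; rewrite ltnn.
by exists (perm ro_inj) => a b hab; rewrite !permE; apply: rk_mono.
Qed.

End B.

Set Implicit Arguments.
Notation pfx := Pilot.Defs.prefix.
Section A.
Variable R : realType.
Variable k : nat.
Implicit Types (f : {set 'I_k} -> R) (rho : {perm 'I_k}) (T : {set 'I_k}).

Definition ivec T : vec R k := fun j => if j \in T then 1 else 0.

Lemma mem_prefix rho (n : nat) x : (x \in pfx rho n) = ((rho^-1)%g x < n)%N.
Proof.
apply/imsetP/idP => [[j]|h].
  by rewrite inE => hj ->; rewrite permK.
by exists ((rho^-1)%g x); rewrite ?inE // permKV.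
Qed.

Lemma prefixS rho (i : 'I_k) x :
  (x \in pfx rho i.+1) = (x \in pfx rho i) || (x == rho i).
Proof.
rewrite !mem_prefix ltnS leq_eqVlt orbC; congr (_ || _).
rewrite -(inj_eq (@perm_inj _ (rho^-1)%g)) permK; apply/eqP/eqP => [h|->//].
by apply: val_inj.
Qed.

Lemma prefix0 rho : pfx rho 0 = finset.set0.
Proof. by apply/setP => x; rewrite mem_prefix inE. Qed.

Lemma prefixk rho : pfx rho k = [set: 'I_k].
Proof. by apply/setP => x; rewrite mem_prefix inE ltn_ord. Qed.

Lemma tele f rho T :
  \sum_(i < k) (f (pfx rho i.+1 :&: T) - f (pfx rho i :&: T))
  = f T - f finset.set0.
Proof.
rewrite -(big_mkord xpredT (fun i => f (pfx rho i.+1 :&: T) - f (pfx rho i :&: T))).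
by rewrite telescope_sumr // prefixk prefix0 finset.setTI finset.set0I.
Qed.

Lemma lovasz_term_ivec_le f rho T : submodular f -> normalized f ->
  lovasz_term f (ivec T) rho <= f T.
Proof.
move=> hs hn; rewrite /lovasz_term.
have -> : f T = f T - f finset.set0 by rewrite hn subr0.
  rewrite -(tele f rho T). apply: ler_sum => i _.
rewrite /ivec; case: ifP => hT.
  rewrite mul1r.
  have := hs (pfx rho i) (pfx rho i.+1 :&: T).
  have -> : pfx rho i :|: pfx rho i.+1 :&: T = pfx rho i.+1.
    apply/setP => x; rewrite !inE prefixS.
    by case: (x =P rho i) => [->|]; rewrite ?hT ?orbT ?andbT ?orbF ?andbF //; case: (x \in pfx rho i).
  have -> : pfx rho i :&: (pfx rho i.+1 :&: T) = pfx rho i :&: T.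
    apply/setP => x; rewrite !inE prefixS.
    by case: (x \in pfx rho i).
  lra.
have -> : pfx rho i.+1 :&: T = pfx rho i :&: T.
  apply/setP => x; rewrite !inE prefixS.
  by case: (x =P rho i) => [->|]; rewrite ?hT ?andbF ?orbF.
by rewrite mul0r subrr.
Qed.

Definition downclosed rho T := forall a b : 'I_k, (a <= b)%N -> rho b \in T -> rho a \in T.

Lemma lovasz_term_ivec_eq f rho T : normalized f -> downclosed rho T ->
  lovasz_term f (ivec T) rho = f T.
Proof.
move=> hn hd; rewrite /lovasz_term.
have -> : f T = f T - f finset.set0 by rewrite hn subr0.
  rewrite -(tele f rho T); apply: eq_bigr => i _.
rewrite /ivec; case: ifP => hT.
  have sub : pfx rho i.+1 \subset T.
    apply/fintype.subsetP => x; rewrite mem_prefix ltnS => hx.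
    by rewrite -(permKV rho x); apply: (hd _ i).
  rewrite mul1r (finset.setIidPl sub) (finset.setIidPl _) //.
  apply: (fintype.subset_trans _ sub); apply/fintype.subsetP => x; rewrite prefixS => ->//.
have -> : pfx rho i.+1 :&: T = pfx rho i :&: T.
  apply/setP => x; rewrite !inE prefixS.
  by case: (x =P rho i) => [->|]; rewrite ?hT ?andbF ?orbF.
by rewrite mul0r subrr.
Qed.

Lemma lovasz_term_lin f rho (n : nat) (c : 'I_n -> R) (x : 'I_n -> vec R k) :
  lovasz_term f (fun j => \sum_(i < n) c i * x i j) rho
  = \sum_(i < n) c i * lovasz_term f (x i) rho.
Proof.
rewrite /lovasz_term.
under eq_bigr do rewrite mulr_suml.
rewrite exchange_big; apply: eq_bigr => i _.
by rewrite mulr_sumr; apply: eq_bigr => j _; rewrite mulrA.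
Qed.

Lemma lovasz_term_add f rho (x y : vec R k) :
  lovasz_term f (fun j => x j + y j) rho = lovasz_term f x rho + lovasz_term f y rho.
Proof.
by rewrite /lovasz_term -big_split; apply: eq_bigr => i _; rewrite mulrDl.
Qed.

Lemma lovasz_ge f x rho : lovasz_term f x rho <= lovasz f x.
Proof. exact: le_bigmax. Qed.

Lemma lovasz_le f x c : (forall rho, lovasz_term f x rho <= c) -> lovasz f x <= c.
Proof. by move=> h; apply/bigmax_leP; split. Qed.

Lemma lovasz_term_mono f rho (x y : vec R k) : increasing f ->
  (forall j, x j <= y j) -> lovasz_term f x rho <= lovasz_term f y rho.
Proof.
move=> hi hxy; apply: ler_sum => i _; apply: ler_wpM2r => //.
rewrite subr_ge0; apply: hi; apply/fintype.subsetP => z; rewrite prefixS => ->//.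
Qed.

Lemma lovasz_mono f (x y : vec R k) : increasing f ->
  (forall j, x j <= y j) -> lovasz f x <= lovasz f y.
Proof.
move=> hi hxy; apply: lovasz_le => rho.
apply: le_trans (lovasz_ge f y rho); exact: lovasz_term_mono.
Qed.

End A.

Unset Implicit Arguments.

Section C.
Variable R : realType.
Variable k : nat.

Lemma decomp (w : vec R k) : (forall j, `|w j| <= 1) ->
  exists (pi : {perm 'I_k}) (b : signvec k) (lam : 'I_k.+1 -> R),
  [/\ forall i, 0 <= lam i, \sum_i lam i = 1 &
      w = fun j => \sum_i lam i * emul (ind R pi i) (yvec R b) j].
Proof.
move=> hw.
pose lt := fun j j' : 'I_k => (`|w j'| < `|w j|) || ((`|w j| == `|w j'|) && (j < j')%N).
have [r hr] : exists r : {perm 'I_k}, forall a b, lt a b -> (r a < r b)%N.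
  apply: perm_of_order.
  - by move=> j; rewrite /lt ltxx ltnn andbF.
  - move=> b a c; rewrite /lt => /orP[h1|/andP[/eqP h1 h1']] /orP[h2|/andP[/eqP h2 h2']].
    + by rewrite (lt_trans h2 h1).
    + by rewrite -h2 h1.
    + by rewrite h1 h2.
    + by rewrite h1 h2 eqxx (ltn_trans h1' h2') orbT.
  - move=> a b hab; rewrite /lt; case: (ltgtP `|w a| `|w b|) => h.
    + by [].
    + by [].
    + by move: hab; rewrite neq_ltn => /orP[] ->; rewrite ?orbT.
have rmono j j' : (r j < r j')%N -> `|w j'| <= `|w j|.
  move=> h; rewrite leNgt; apply/negP => h'.
  have := hr j' j; rewrite /lt h' /= => /(_ isT) h2.
  by move: (ltn_trans h h2); rewrite ltnn.
pose g (n : nat) : R := if n is n'.+1 then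
   (if [pick j | (r j == n' :> nat)] is Some j then `|w j| else 0) else 1.
have gE j : g (r j).+1 = `|w j|.
  rewrite /g; case: pickP => [j' /eqP h|h]; last by move: (h j); rewrite eqxx.
  by have -> : j' = j by apply: (@perm_inj _ r); apply: val_inj.
have gk : g k.+1 = 0.
  rewrite /g; case: pickP => [j' /eqP h|//].
  by move: (ltn_ord (r j')); rewrite h ltnn.
have g0 n : 0 <= g n.+1.
  by rewrite /g; case: pickP => [j' _|_] //.
have gle n : g n.+1 <= g n.
  case: n => [|m]; first by rewrite /g; case: pickP => [j' _|_] //; rewrite ?ler01.
  rewrite {1}/g; case: pickP => [j' /eqP h|_]; last exact: g0.
  have hm : (m < k)%N by have := ltn_ord (r j'); rewrite h => /ltnW.
  rewrite /g; case: pickP => [j'' /eqP h'|h'].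
    by apply: rmono; rewrite h h'.
  by move: (h' ((r^-1)%g (Ordinal hm))); rewrite permKV eqxx.
pose lam' (n : nat) := g n - g n.+1.
exists (r^-1)%g, [ffun j => (0 <= w j)], (fun i : 'I_k.+1 => lam' i); split.
- by move=> i; rewrite /lam' subr_ge0.
- rewrite -(big_mkord xpredT lam').
  rewrite (telescope_sumr_eq (fun n => - g n)) //; first by rewrite gk /= oppr0 opprK add0r.
  by move=> i _; rewrite /lam' opprK addrC.
- apply: funext => j.
  rewrite /emul /ind /yvec invgK ffunE.
  have -> : \sum_(i < k.+1) lam' i * ((if (r j < i)%N then 1 else 0) * (if 0 <= w j then 1 else -1))
      = (\sum_(i < k.+1) (if (r j < i)%N then lam' i else 0)) * (if 0 <= w j then 1 else -1).
    rewrite mulr_suml; apply: eq_bigr => i _.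
    by case: ifP => _; rewrite ?mul1r ?mulr1 ?mul0r ?mulr0.
  rewrite -(big_mkord xpredT (fun i => if (r j < i)%N then lam' i else 0)).
  rewrite (big_cat_nat _ (n:=(r j).+1)) //=; last by rewrite ltnS ltnW.
  rewrite big_nat_cond big1 ?add0r; last first.
    by move=> i /andP[/andP[_ hi] _]; rewrite ltnNge -ltnS hi.
  rewrite (eq_big_nat _ _ (F2 := lam')); last first.
    by move=> i /andP[hi _]; rewrite hi.
  rewrite (telescope_sumr_eq (fun n => - g n)); last first.
    by move=> i _; rewrite /lam' opprK addrC.
    exact: ltnW (ltn_ord _).
  rewrite gk gE oppr0 opprK add0r.
  case: ifP => h; first by rewrite mulr1 ger0_norm.
  by rewrite ltr0_norm ?mulrN1 ?opprK // ltNge h.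
Qed.

End C.

Section D.
Variable R : realType.
Variable k : nat.

Lemma maxE0 (x : R) : 0 <= x -> Num.max x 0 = x.
Proof. by move=> h; rewrite max_l. Qed.

Lemma affine_ge (f : {set 'I_k} -> R) (hf : inFk f) (pi : {perm 'I_k}) (b b' : signvec k)
  (lam : 'I_k.+1 -> R) (hl : forall i, 0 <= lam i) (hs : \sum_i lam i = 1) :
  \sum_i lam i * lovasz_hinge f (emul (ind R pi i) (yvec R b)) b'
  <= lovasz_hinge f (fun j => \sum_i lam i * emul (ind R pi i) (yvec R b) j) b'.
Proof.
case: hf => hsub hinc hnorm.
set z := fun i => emul (ind R pi i) (yvec R b).
pose key (j : 'I_k) : nat := if b j != b' j then ((pi^-1)%g j : nat) else (2 * k - (pi^-1)%g j)%N.
have keyinj : injective key.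
  move=> j j'; rewrite /key => h; apply: (@perm_inj _ (pi^-1)%g); apply: val_inj.
  have l1 := ltn_ord ((pi^-1)%g j); have l2 := ltn_ord ((pi^-1)%g j').
  move: h; case: (b j != b' j); case: (b j' != b' j') => /= h; lia.
have [r hr] : exists r : {perm 'I_k}, forall a c, (key a < key c)%N -> (r a < r c)%N.
  apply: (@perm_of_order k (fun a c => (key a < key c)%N)).
  - by move=> a; rewrite /= ltnn.
  - by move=> a c d /= h1 h2; apply: ltn_trans h1 h2.
  - move=> a c hac /=; rewrite -neq_ltn; apply/negP => /eqP /keyinj /eqP.
    by rewrite (negbTE hac).
set sigma := (r^-1)%g.
have down (T : {set 'I_k}) : (forall j j', (key j' <= key j)%N -> j \in T -> j' \in T) ->
    downclosed sigma T.
  move=> hT a c hac hc; apply: (hT (sigma c)) hc.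
  rewrite leqNgt; apply/negP => /hr; rewrite /sigma !permKV => h.
  by move: (leq_ltn_trans hac h); rewrite ltnn.
pose T1 (i : 'I_k.+1) := [set j | ~~ (((pi^-1)%g j < i)%N && (b j == b' j))].
pose T2 (i : 'I_k.+1) := [set j | ((pi^-1)%g j < i)%N && (b j != b' j)].
have d1 i : downclosed sigma (T1 i).
  apply: down => j j'; rewrite !inE /key.
  have l1 := ltn_ord ((pi^-1)%g j); have l2 := ltn_ord ((pi^-1)%g j').
  have l3 := ltn_ord i.
  case: (b j =P b' j) => /= ej; case: (b j' =P b' j') => /= ej'; rewrite ?andbF ?andbT //; lia.
have d2 i : downclosed sigma (T2 i).
  apply: down => j j'; rewrite !inE /key.
  have l1 := ltn_ord ((pi^-1)%g j); have l2 := ltn_ord ((pi^-1)%g j').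
  have l3 := ltn_ord i.
  case: (b j =P b' j) => /= ej; case: (b j' =P b' j') => /= ej'; rewrite ?andbF ?andbT //; lia.
have zle i j : z i j * yvec R b' j <= 1.
  rewrite /z /emul /ind /yvec.
  by case: ifP => _; case: (b j); case: (b' j); lra.
have xz i j : Num.max (1 - z i j * yvec R b' j) 0 = ivec R (T1 i) j + ivec R (T2 i) j.
  rewrite maxE0 ?subr_ge0 // /z /emul /ind /yvec /ivec !inE.
  by case: ifP => _; case: (b j); case: (b' j); rewrite /=; lra.
have xz' i j : Num.max (1 - z i j * yvec R b' j) 0 = 1 - z i j * yvec R b' j.
  by rewrite maxE0 ?subr_ge0.
have Xw : (fun j => Num.max (1 - (\sum_i lam i * z i j) * yvec R b' j) 0)
    = (fun j => \sum_i lam i * Num.max (1 - z i j * yvec R b' j) 0).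
  apply: funext => j.
  have e : 1 - (\sum_i lam i * z i j) * yvec R b' j = \sum_i lam i * (1 - z i j * yvec R b' j).
    rewrite -{1}hs mulr_suml -sumrB; apply: eq_bigr => i _; ring.
  rewrite e maxE0; last by apply: sumr_ge0 => i _; apply: mulr_ge0; rewrite ?subr_ge0.
  by apply: eq_bigr => i _; rewrite xz'.
have XzE i : (fun j => Num.max (1 - z i j * yvec R b' j) 0)
    = (fun j => ivec R (T1 i) j + ivec R (T2 i) j).
  by apply: funext => j; rewrite xz.
rewrite /lovasz_hinge Xw.
apply: le_trans (lovasz_ge _ _ sigma).
rewrite lovasz_term_lin; apply: ler_sum => i _; apply: ler_wpM2l => //.
rewrite XzE lovasz_term_add !lovasz_term_ivec_eq //.
apply: lovasz_le => rho; rewrite lovasz_term_add.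
by apply: lerD; apply: lovasz_term_ivec_le.
Qed.

End D.

Section E.
Variable R : realType.
Variable k : nat.

Lemma clip_cases (x : R) : let c := Num.sg x * Num.min `|x| 1 in
  (x <= -1 /\ c = -1) \/ (-1 <= x <= 1 /\ c = x) \/ (1 <= x /\ c = 1).
Proof.
move=> c; rewrite /c.
case: (boolP (0 <= x)) => hx.
  rewrite ger0_norm //.
  move: hx; rewrite le_eqVlt => /orP[/eqP <-|hx].
    by right; left; rewrite sgr0 mul0r; split => //; lra.
  rewrite gtr0_sg // mul1r.
  case: (boolP (x <= 1)) => h1.
    by right; left; rewrite min_l //; split => //; lra.
  by right; right; rewrite min_r; [split => //; lra | lra].
have hx' : x < 0 by rewrite ltNge.
rewrite ltr0_norm // ltr0_sg // mulN1r.
case: (boolP (- x <= 1)) => h1.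
  by right; left; rewrite min_l //; split; [lra | lra].
by left; rewrite min_r; [split; lra | lra].
Qed.

Lemma clip_le1 (u : vec R k) j : `|clip u j| <= 1.
Proof.
rewrite /clip ler_norml; have := clip_cases (u j) => /=.
by case=> [[h ->]|[[/andP[h1 h2] ->]|[h ->]]]; lra.
Qed.

Lemma clip_lip (a u : vec R k) j : `|clip a j - clip u j| <= `|a j - u j|.
Proof.
rewrite /clip ler_norml.
have n1 := ler_norm (a j - u j); have n2 := ler_norm (- (a j - u j)).
rewrite normrN in n2.
have := clip_cases (a j); have := clip_cases (u j) => /=.
case=> [[h ->]|[[/andP[h1 h2] ->]|[h ->]]];
case=> [[g ->]|[[/andP[g1 g2] ->]|[g ->]]]; apply/andP; split; lra.
Qed.

Lemma max0_mono (x x' : R) : x <= x' \/ x <= 0 -> Num.max x 0 <= Num.max x' 0.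
Proof.
rewrite ge_max !le_max lexx !orbT andbT.
by case=> ->; rewrite ?orbT.
Qed.

Lemma hinge_clip (a : vec R k) (b : signvec k) j :
  Num.max (1 - clip a j * yvec R b j) 0 <= Num.max (1 - a j * yvec R b j) 0.
Proof.
apply: max0_mono; rewrite /clip /yvec; have := clip_cases (a j) => /=.
case: (b j).
  by case=> [[h ->]|[[/andP[h1 h2] ->]|[h ->]]]; [left|left|right]; lra.
by case=> [[h ->]|[[/andP[h1 h2] ->]|[h ->]]]; [right|left|left]; lra.
Qed.

Lemma Lexp_clip (f : {set 'I_k} -> R) (hf : inFk f) (p : {ffun signvec k -> R})
  (hp : distrY p) (a : vec R k) : Lexp f (clip a) p <= Lexp f a p.
Proof.
case: hf => _ hinc _; case: hp => hp _.
apply: ler_sum => y _; apply: ler_wpM2l => //.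
by apply: lovasz_mono => // j; apply: hinge_clip.
Qed.

Lemma supnorm_mono (x y : vec R k) : (forall i, `|x i| <= `|y i|) -> supnorm x <= supnorm y.
Proof.
move=> h; rewrite /supnorm.
apply: (big_ind2 (fun a b : R => a <= b)) => //.
move=> x1 x2 y1 y2 h1 h2; rewrite ge_max !le_max.
by rewrite h1 h2 !orbT.
Qed.

Lemma supnorm0 (x : vec R k) : supnorm (fun i => x i - x i) = 0.
Proof.
rewrite /supnorm; apply: (big_ind (fun a : R => a = 0)) => //.
  by move=> a c -> ->; rewrite maxxx.
by move=> i _; rewrite subrr normr0.
Qed.

End E.

Local Open Scope classical_set_scope.

Lemma face_conv (R : realType) (k : nat) (pi : {perm 'I_k}) (b : signvec k)
  (lam : 'I_k.+1 -> R) (hl : forall i, 0 <= lam i) (hs : \sum_i lam i = 1) :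
  Vface [set x | exists i, 0 < lam i /\ x = emul (ind R pi i) (yvec R b)] /\
  conv [set x | exists i, 0 < lam i /\ x = emul (ind R pi i) (yvec R b)]
    (fun j => \sum_i lam i * emul (ind R pi i) (yvec R b) j).
Proof.
split.
  by exists pi, b => x [i [_ ->]]; exists i.
have [i0 hi0] : exists i0, 0 < lam i0.
  case: (pickP (fun i => 0 < lam i)) => [i0 h|h]; first by exists i0.
  exfalso; move: hs; rewrite big1 => [/eqP|i _]; first by rewrite eq_sym oner_eq0.
  by apply/eqP; rewrite eq_le hl andbT leNgt h.
exists k.+1, (fun i => if 0 < lam i then emul (ind R pi i) (yvec R b)
                       else emul (ind R pi i0) (yvec R b)), lam; split => //.
  by move=> j /=; case: ifP => h; [exists j | exists i0].
apply: funext => j; apply: eq_bigr => i _.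
case: ifP => // h.
have -> : lam i = 0 by apply/eqP; rewrite eq_le hl andbT leNgt h.
by rewrite !mul0r.
Qed.

Theorem proposition2 (R : realType) (eps : R) (heps : 0 < eps) (k : nat)
  (f : {set 'I_k} -> R) (hf : inFk f) (u : 'I_k -> R) :
  Psihat eps u `<=` Psif eps f u.
Proof.
move=> v hv; split.
  have [pi [b [lam [hl hs hw]]]] := @decomp R k _ (@clip_le1 R k u).
  have [hV hc] := @face_conv R k pi b lam hl hs.
  have := hv _ (conj hV (ex_intro2 _ _ (clip u) (eq_ind_r _ hc hw) _)).
  rewrite supnorm0 => /(_ heps) [i [_ ->]] j.
  rewrite /emul /ind /yvec.
  by case: ifP => _; case: (b j); rewrite ?mul1r ?mul0r; auto.
move=> U [[p [hp ->]] [a ha hau]] u'.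
set w := clip a.
have hmin : forall u', Lexp f w p <= Lexp f u' p.
  by move=> u''; apply: le_trans (@Lexp_clip R k f hf p hp a) (ha u'').
have [pi [b [lam [hl hs hw]]]] := @decomp R k _ (@clip_le1 R k a).
have [hV hc] := @face_conv R k pi b lam hl hs.
have hlt : supnorm (fun i => w i - clip u i) < eps.
  apply: le_lt_trans hau; apply: supnorm_mono => i; exact: clip_lip.
have := hv _ (conj hV (ex_intro2 _ _ w (eq_ind_r _ hc hw) hlt)).
move=> [i [hli ->]].
set z := fun i => emul (ind R pi i) (yvec R b).
have haff : \sum_i lam i * Lexp f (z i) p <= Lexp f w p.
  rewrite /Lexp /w hw.
  under eq_bigr do rewrite mulr_sumr.
  rewrite exchange_big; apply: ler_sum => y _.
  under eq_bigr do rewrite mulrCA.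
  rewrite -mulr_sumr; apply: ler_wpM2l; first by case: hp.
  exact: affine_ge.
have hz : forall j, Lexp f w p <= Lexp f (z j) p by move=> j; apply: hmin.
have hsum : \sum_j lam j * (Lexp f (z j) p - Lexp f w p) = 0.
  apply/eqP; rewrite eq_le; apply/andP; split.
    have -> : \sum_j lam j * (Lexp f (z j) p - Lexp f w p)
        = \sum_j lam j * Lexp f (z j) p - (\sum_j lam j) * Lexp f w p.
      by rewrite mulr_suml -sumrB; apply: eq_bigr => j _; ring.
    by rewrite hs mul1r subr_le0.
  by apply: sumr_ge0 => j _; apply: mulr_ge0; rewrite ?subr_ge0.
have hnn : forall j : 'I_k.+1, true -> 0 <= lam j * (Lexp f (z j) p - Lexp f w p).
  by move=> j _; apply: mulr_ge0; rewrite ?subr_ge0.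
have := psumr_eq0P hnn hsum (i:=i) isT; move=> /eqP.
rewrite mulf_eq0 (gt_eqF hli) /= subr_eq0 => /eqP ->.
exact: hmin.
Qed.
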